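(* Fix a field $\mathbb{F}$ and let $X$ be a regular $n$-dimensional CW complex. Then the matroid $M_n^{\mathbb{F}}(X)$ is $k$-connected if and only if for every integer $l$ with $1 \le l < k$ and every partition $X_n = E_1 \cup E_2$ into disjoint subsets with $|E_1|, |E_2| \ge l$, one has $\nu_{n-1}(E_1,E_2) \ge l$.
   Context: A CW complex $X$ is regular if it is compact (finitely many cells), all attaching maps are embeddings, and any two $k$-cells share at most one $(k-1)$-dimensional face. $X$ is $n$-dimensional if it has no cells of dimension greater than $n$ and the union of its $n$-cells is an open dense subset of $X$. $X_k$ is the set of $k$-cells. For $E \subseteq X_n$, $\overline{E}$ is the point-set closure in $X$ of the union of the cells in $E$. $M_n^{\mathbb{F}}(X)$ is the linear matroid over $\mathbb{F}$ on ground set $X_n$ represented by the columns of the matrix of the cellular boundary operator $\partial_n^{\mathbb{F}}$, with rank function $r$. $\nu_{n-1}(E_1,E_2)$ is the dimension of the kernel of the map $\tilde H_{n-1}(\overline{E_1}\cap\overline{E_2};\mathbb{F}) \to \tilde H_{n-1}(\overline{E_1};\mathbb{F}) \oplus \tilde H_{n-1}(\overline{E_2};\mathbb{F})$ induced by inclusions (reduced homology). A $k$-separation of a matroid $M$ on ground set $E$ is a partition of $E$ into disjoint $E_1, E_2$ with $|E_1|, |E_2| \ge k$ and $r(E_1) + r(E_2) \le r(M) + k - 1$; $M$ is $k$-connected if it has no $l$-separation for any $1 \le l < k$. *)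

(* Defs.v *)
(* Combinatorial model of a finite regular CW complex:
   cells are 'I_N, dim : 'I_N -> nat, and the cellular boundary operator is
   given by its incidence matrix D : 'M[F]_N, where D i j = [i : j] is the
   coefficient of the cell j in the cellular boundary of the cell i.
   Chains are row vectors; the augmented complex adds a (-1)-cell (index
   ord0 of 'I_N.+1) so that homology is reduced homology. *)
From HB Require Import structures.
From mathcomp Require Import all_boot all_order all_algebra.
Set Implicit Arguments.
Unset Strict Implicit.
Unset Printing Implicit Defensive.
Import GRing.Theory.
Local Open Scope ring_scope.

Section CW.
Variables (F : fieldType) (N : nat) (dim : 'I_N -> nat) (D : 'M[F]_N).

Definition facet : rel 'I_N := fun i j => D i j != 0.
Definition face_of (i j : 'I_N) : bool := connect facet i j.

Definition clos (E : {set 'I_N}) : {set 'I_N} :=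
  [set j | [exists i in E, face_of i j]].

Definition adim (i : 'I_N.+1) : nat :=
  if unlift ord0 i is Some j then (dim j).+1 else 0%N.

Definition Daug : 'M[F]_N.+1 :=
  \matrix_(i, j) match unlift ord0 i, unlift ord0 j with
                 | Some a, Some b => D a b
                 | Some a, None => if dim a == 0%N then 1 else 0
                 | None, _ => 0
                 end.

Definition aset (E : {set 'I_N}) : {set 'I_N.+1} :=
  ord0 |: [set lift ord0 j | j in E].

Definition rowsOf m (P : pred 'I_N.+1) (M : 'M[F]_(N.+1, m)) : 'M[F]_(N.+1, m) :=
  \matrix_(i, j) if P i then M i j else 0.

(* augmented-degree q  =  geometric degree q - 1 *)
Definition chainsA (S : {set 'I_N.+1}) (q : nat) : 'M[F]_N.+1 :=
  rowsOf [pred i | (i \in S) && (adim i == q)] 1%:M.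
Definition cyclesA (S : {set 'I_N.+1}) (q : nat) : 'M[F]_N.+1 :=
  (chainsA S q :&: kermx Daug)%MS.
Definition bdryA (S : {set 'I_N.+1}) (q : nat) : 'M[F]_N.+1 :=
  rowsOf [pred i | (i \in S) && (adim i == q.+1)] Daug.

(* nu_{n-1}(E1,E2): dimension of the kernel of
   H~_{n-1}(cl E1 /\ cl E2) -> H~_{n-1}(cl E1) (+) H~_{n-1}(cl E2),
   i.e. dim ((Z~(A/\B) /\ B(A) /\ B(B)) / B(A/\B)).  Geometric degree n-1 is
   augmented degree n. *)
Definition nu (n : nat) (E1 E2 : {set 'I_N}) : nat :=
  let A := aset (clos E1) in let B := aset (clos E2) in
  (\rank (cyclesA (A :&: B) n :&: bdryA A n :&: bdryA B n)%MS
   - \rank (bdryA (A :&: B) n))%N.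

(* the linear matroid M_n^F(X): rank of a set E of n-cells = rank of the
   boundary vectors (columns of the boundary operator) of the cells in E *)
Definition mrank (E : {set 'I_N}) : nat :=
  \rank (rowsOf [pred i | if unlift ord0 i is Some j then j \in E else false]
                Daug).

Definition cells (n : nat) : {set 'I_N} := [set c | dim c == n].

Definition is_separation (n l : nat) (E1 E2 : {set 'I_N}) : Prop :=
  [/\ E1 :&: E2 = set0, E1 :|: E2 = cells n, (l <= #|E1|)%N, (l <= #|E2|)%N &
      (mrank E1 + mrank E2 <= mrank (cells n) + l - 1)%N].

Definition k_connected (n k : nat) : Prop :=
  forall l, (1 <= l < k)%N -> ~ exists E1 E2, is_separation n l E1 E2.

Definition is_regular_CW (n : nat) : Prop :=
  (forall i, dim i <= n)%N /\
  (forall i j, D i j != 0 -> dim i = (dim j).+1) /\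
  (forall i j, D i j \in [:: 0; 1; -1]) /\
  Daug *m Daug = 0 /\
  (forall i, dim i = 1%N -> #|[set j | facet i j]| = 2%N) /\
  (* diamond property of face posets of regular CW complexes *)
  (forall i l, dim i = (dim l).+2 -> face_of i l ->
     #|[set j | facet i j && facet j l]| = 2%N) /\
  (forall i i', i != i' -> dim i = dim i' ->
     #|[set j | facet i j && facet i' j]| <= 1)%N /\
  (* n-dimensional: union of n-cells is dense, i.e. every cell is a face
     of an n-cell *)
  (forall c, exists2 i, dim i = n & face_of i c).

End CW.

(* Main.v *)
Require Import Defs.
From HB Require Import structures.
From mathcomp Require Import all_boot all_order all_algebra.
Set Implicit Arguments. Unset Strict Implicit. Unset Printing Implicit Defensive.
Import GRing.Theory.
From mathcomp Require Import zify.

Section Aux.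
Variables (F : fieldType) (N : nat) (dim : 'I_N -> nat) (D : 'M[F]_N).
Local Open Scope ring_scope.

Lemma rowsOf_eq m (P Q : pred 'I_N.+1) (M : 'M[F]_(N.+1,m)) :
  P =1 Q -> rowsOf P M = rowsOf Q M.
Proof. by move=> PQ; apply/matrixP=> i j; rewrite !mxE PQ. Qed.

Lemma rowsOfE m P (M : 'M[F]_(N.+1,m)) : rowsOf P M = rowsOf P 1%:M *m M.
Proof.
apply/matrixP=> i j; rewrite !mxE (bigD1 i) //= big1 ?addr0.
  by rewrite !mxE eqxx; case: (P i); rewrite ?mul1r ?mul0r.
by move=> k /negbTE ki; rewrite !mxE eq_sym ki; case: (P i); rewrite ?mul0r.
Qed.

Lemma rowsOf_mul (P Q : pred 'I_N.+1) :
  rowsOf P 1%:M *m rowsOf Q (1%:M : 'M[F]_N.+1) = rowsOf [pred i | P i && Q i] 1%:M.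
Proof.
rewrite -rowsOfE; apply/matrixP=> i j; rewrite !mxE /=.
by case: (P i); case: (Q i).
Qed.

Lemma rowsOf_idem m (P : pred 'I_N.+1) (X : 'M[F]_(m, N.+1)) :
  (X <= rowsOf P 1%:M)%MS -> X *m rowsOf P 1%:M = X.
Proof.
move/submxP=> [W ->]; rewrite -mulmxA rowsOf_mul.
by rewrite (@rowsOf_eq _ _ P) // => i; rewrite /= andbb.
Qed.

Lemma sub_rowsOf1 m (P : pred 'I_N.+1) (X : 'M[F]_(m, N.+1)) :
  (forall i j, X i j != 0 -> P j) -> (X <= rowsOf P 1%:M)%MS.
Proof.
move=> H; have <- : X *m rowsOf P 1%:M = X; last exact: submxMl.
apply/matrixP=> i j; rewrite !mxE (bigD1 j) //= big1 ?addr0.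
  rewrite !mxE eqxx; case Pj: (P j); first by rewrite mulr1.
  rewrite mulr0; apply/esym/eqP; apply: contraFT Pj; exact: H.
by move=> k /negbTE kj; rewrite !mxE kj; case: (P k); rewrite ?mulr0.
Qed.

Lemma cap_rowsOf1 (P Q : pred 'I_N.+1) :
  (rowsOf P 1%:M :&: rowsOf Q 1%:M <= rowsOf [pred i | P i && Q i] (1%:M : 'M[F]_N.+1))%MS.
Proof.
set V := (_ :&: _)%MS.
have hP := rowsOf_idem (capmxSl (rowsOf P 1%:M) (rowsOf Q 1%:M)).
have hQ := rowsOf_idem (capmxSr (rowsOf P 1%:M) (rowsOf Q 1%:M)).
have <- : V *m rowsOf [pred i | P i && Q i] 1%:M = V; last exact: submxMl.
by rewrite -rowsOf_mul mulmxA hP hQ.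
Qed.

Lemma rowsOf_sub m (P Q : pred 'I_N.+1) (M : 'M[F]_(N.+1, m)) :
  subpred P Q -> (rowsOf P M <= rowsOf Q M)%MS.
Proof.
move=> H; have -> : rowsOf P M = rowsOf P (rowsOf Q M).
  by apply/matrixP=> i j; rewrite !mxE; case: (boolP (P i)) => // /H ->.
by rewrite (rowsOfE P) submxMl.
Qed.

Hypothesis Hf : forall i j, D i j != 0 -> dim i = (dim j).+1.

Lemma path_dim x p : path (facet D) x p -> (dim (last x p) + size p)%N = dim x.
Proof.
elim: p x => [|y p IH] x /=; first by rewrite addn0.
by case/andP=> /Hf dx /IH e; rewrite addnS e dx.
Qed.

Lemma face_dim i j : face_of D i j -> (dim j <= dim i)%N /\ (dim j = dim i -> j = i).
Proof.
case/connectP=> p /path_dim <- ->; split; first exact: leq_addr.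
case: p => [//|y p] /= e; exfalso; lia.
Qed.

Lemma closn n (E : {set 'I_N}) j : E \subset cells dim n ->
  (j \in clos D E) && (dim j == n) = (j \in E).
Proof.
move=> /subsetP sE; apply/idP/idP.
  case/andP; rewrite inE => /existsP [i /andP [iE fij]] /eqP dj.
  have := sE _ iE; rewrite inE => /eqP di.
  by case: (face_dim fij) => _ /(_ (etrans dj (esym di))) ->.
move=> jE; have := sE _ jE; rewrite inE => ->; rewrite andbT inE.
by apply/existsP; exists j; rewrite jE /face_of connect0.
Qed.


Lemma mem_aset E (j : 'I_N.+1.-1) : (lift (ord0 : 'I_N.+1) j \in aset E) = (j \in E).
Proof. by rewrite /aset in_setU1 eq_sym (negbTE (neq_lift _ _)) /= mem_imset //; apply: lift_inj. Qed.

Lemma ord0_aset E : (ord0 : 'I_N.+1) \in aset E.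
Proof. by rewrite in_setU1 eqxx. Qed.

Lemma bdry_chains n (E : {set 'I_N}) : E \subset cells dim n ->
  (bdryA dim D (aset (clos D E)) n <= chainsA F dim (aset (clos D E)) n)%MS.
Proof.
move=> sE; apply: sub_rowsOf1 => i j; rewrite !mxE /=.
case: (unliftP ord0 i) => [a ->|->]; rewrite /adim ?liftK ?unlift_none ?andbF ?eqxx //.
rewrite mem_aset eqSS; case: ifP => [/andP[aE /eqP da] | _]; last by rewrite eqxx.
case: (unliftP ord0 j) => [b ->|->]; rewrite ?liftK ?unlift_none.
  move=> nz; rewrite mem_aset -da (Hf nz) eqxx andbT.
  move: aE; rewrite !inE => /existsP [c /andP[cE fca]]; apply/existsP; exists c.
  by rewrite cE /face_of (connect_trans fca) // connect1.
by case: (dim a =P 0%N) => [d0 _ | _]; [rewrite ord0_aset -da d0 /= | rewrite eqxx].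
Qed.


Definition P1 (E : {set 'I_N}) : pred 'I_N.+1 :=
  fun i => if unlift ord0 i is Some j then j \in E else false.

Lemma bdry_eq n (E : {set 'I_N}) : E \subset cells dim n ->
  bdryA dim D (aset (clos D E)) n = rowsOf (P1 E) (Daug dim D).
Proof.
move=> sE; apply: rowsOf_eq => i /=; rewrite /P1.
case: (unliftP ord0 i) => [j ->|->]; rewrite /adim ?liftK ?unlift_none ?andbF //.
by rewrite mem_aset eqSS closn.
Qed.

Lemma key n E1 E2 : Daug dim D *m Daug dim D = 0 ->
  E1 :&: E2 = set0 -> E1 :|: E2 = cells dim n ->
  (nu dim D n E1 E2 + mrank dim D (cells dim n) = mrank dim D E1 + mrank dim D E2)%N.
Proof.
move=> HDD EI EU.
have s1 : E1 \subset cells dim n by rewrite -EU subsetUl.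
have s2 : E2 \subset cells dim n by rewrite -EU subsetUr.
have dj j : j \in E1 -> j \in E2 -> False.
  move=> a b; have: j \in E1 :&: E2 by rewrite inE a b.
  by rewrite EI inE.
have bdry0 : \rank (bdryA dim D (aset (clos D E1) :&: aset (clos D E2)) n) = 0%N.
  apply/eqP; rewrite mxrank_eq0; apply/eqP/matrixP=> i j; rewrite !mxE /=.
  case: (unliftP ord0 i) => [a ->|->]; rewrite /adim ?liftK ?unlift_none ?andbF //.
  rewrite in_setI !mem_aset eqSS; case: ifP => // /andP[/andP[a1 a2] an]; exfalso.
  by apply: (dj a); [rewrite -(closn a s1) a1 an | rewrite -(closn a s2) a2 an].
set X := bdryA dim D (aset (clos D E1)) n.
set Y := bdryA dim D (aset (clos D E2)) n.
have kX : (X <= kermx (Daug dim D))%MS.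
  by rewrite /X (bdry_eq s1) sub_kermx rowsOfE -mulmxA HDD mulmx0.
have kY : (Y <= kermx (Daug dim D))%MS.
  by rewrite /Y (bdry_eq s2) sub_kermx rowsOfE -mulmxA HDD mulmx0.
have capE : \rank (cyclesA dim D (aset (clos D E1) :&: aset (clos D E2)) n :&: X :&: Y)%MS
    = \rank (X :&: Y)%MS.
  apply/eqP; rewrite eqn_leq; apply/andP; split; apply: mxrankS.
    exact: capmxS (capmxSr _ _) (submx_refl Y).
  rewrite !sub_capmx capmxSl capmxSr !andbT.
  rewrite (submx_trans (capmxSl _ _) kX) andbT.
  apply: submx_trans (capmxS (bdry_chains s1) (bdry_chains s2)) _.
  apply: submx_trans (cap_rowsOf1 _ _) _; rewrite /chainsA.
  rewrite (@rowsOf_eq _ _ [pred i | (i \in aset (clos D E1) :&: aset (clos D E2)) && (adim dim i == n)]) //.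
  by move=> i; rewrite /= in_setI; case: (_ \in _); case: (_ \in _); case: (_ == _).
have sub1 : subpred (P1 E1) (P1 (cells dim n)).
  by move=> i; rewrite /P1; case: (unlift ord0 i) => // a; rewrite -EU inE => ->.
have sub2 : subpred (P1 E2) (P1 (cells dim n)).
  by move=> i; rewrite /P1; case: (unlift ord0 i) => // a; rewrite -EU inE => ->; rewrite orbT.
have hS : rowsOf (P1 (cells dim n)) (Daug dim D) = rowsOf (P1 E1) (Daug dim D) + rowsOf (P1 E2) (Daug dim D).
  apply/matrixP => i j; rewrite !mxE /P1; case: (unliftP ord0 i) => [a _|_]; rewrite ?addr0 //.
  rewrite -EU inE; case: (boolP (a \in E1)) => a1; case: (boolP (a \in E2)) => a2 /=;
    rewrite ?addr0 ?add0r //; exfalso; exact: dj a1 a2.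
have rS : mrank dim D (cells dim n) = \rank (X + Y)%MS.
  rewrite /X /Y (bdry_eq s1) (bdry_eq s2).
  apply/eqP; rewrite eqn_leq; apply/andP; split; apply: mxrankS.
    by rewrite /mrank -/(P1 (cells dim n)) hS addmx_sub_adds.
  by rewrite addsmx_sub !rowsOf_sub.
rewrite /nu -/X -/Y bdry0 subn0 capE rS addnC mxrank_sum_cap.
by rewrite /X /Y (bdry_eq s1) (bdry_eq s2).
Qed.

End Aux.

Theorem mainTheorem4 (F : fieldType) (n N : nat) (dim : 'I_N -> nat)
    (D : 'M[F]_N) (k : nat) :
  is_regular_CW dim D n ->
  (k_connected dim D n k <->
   (forall l : nat, (1 <= l < k)%N ->
      forall E1 E2 : {set 'I_N},
        E1 :&: E2 = set0 -> E1 :|: E2 = cells dim n ->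
        (l <= #|E1|)%N -> (l <= #|E2|)%N ->
        (l <= nu dim D n E1 E2)%N)).
Proof.
move=> [_ [Hf [_ [HDD _]]]]; split.
  move=> kc l hl E1 E2 EI EU h1 h2; rewrite leqNgt; apply/negP => hlt.
  apply: (kc l hl); exists E1, E2; split=> //.
  have e := @key _ _ dim D Hf n E1 E2 HDD EI EU.
  move: hl => /andP [hl1 _]; move: e hlt.
  move: (nu _ _ _ _ _) (mrank _ _ (cells _ _)) (mrank _ _ E1) (mrank _ _ E2) => a b c d.
  clear -hl1; lia.
move=> H l hl [E1 [E2 [EI EU h1 h2 hs]]].
have h := H l hl E1 E2 EI EU h1 h2.
have e := @key _ _ dim D Hf n E1 E2 HDD EI EU.
move: hl => /andP [hl1 _]; move: e hs h.
move: (nu _ _ _ _ _) (mrank _ _ (cells _ _)) (mrank _ _ E1) (mrank _ _ E2) => a b c d.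
clear -hl1; lia.
Qed.
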